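(* Let $\mathcal A=\{A_1,\dots,A_K\}$ be a finite partition of $\mathcal M$ into Borel sets and $Q$ a probability measure on $\mathcal G$. Then $\mathfrak R_{\mathcal A}\mathfrak S_nQ$ is absolutely continuous with respect to $\mathfrak R_{\mathcal A}Q$ with $$\frac{d\mathfrak R_{\mathcal A}\mathfrak S_nQ}{d\mathfrak R_{\mathcal A}Q}=e^{-\hat S_{Q,\mathcal A}/n},$$ where $\hat S_{Q,\mathcal A}(g):=-n\sum_{A\in\mathcal A}\Bigl(\log Q\bigl[e^{-S(X)/n}\,\big|\,X_A=g_A\bigr]-\log Q\bigl[e^{-S(X)/n}\bigr]\Bigr)$.
   Context: $\mathcal M$ is a complete separable metric space; $\mathcal G$ the finite integer-valued Borel measures on $\mathcal M$; $S:\mathcal G\to\mathbb R_+$ a Borel selective cost. For $g\in\mathcal G$ and Borel $R$, $g_R(B):=g(B\cap R)$. $X$ denotes the canonical random element of $\mathcal G$ ($X(g)=g$); $Q[\cdot\mid X_A=g_A]$ is a regular conditional distribution. Selection: $\mathfrak S_nP[F]:=\int e^{-S(g)/n}F(g)\,dP(g)/\int e^{-S(g)/n}\,dP(g)$. Annealed recombination: $\mathfrak R_{\mathcal A}Q[F]:=\int\cdots\int F(g^{(1)}_{A_1}+\cdots+g^{(K)}_{A_K})\,dQ(g^{(1)})\cdots dQ(g^{(K)})$. *)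

(* Defs.v *)
From HB Require Import structures.
From mathcomp Require Import all_boot all_order all_algebra.
From mathcomp Require Import all_classical all_reals all_analysis measurable_realfun.
Set Implicit Arguments. Unset Strict Implicit. Unset Printing Implicit Defensive.
Import Order.TTheory GRing.Theory Num.Theory numFieldNormedType.Exports.
Local Open Scope classical_set_scope.
Local Open Scope ring_scope.

Section Gdefs.
Context {R : realType} {M : pseudoMetricType R}.

Definition borelM : set (set M) := <<s open >>.

(* finite integer-valued Borel measures on M (written out: nat-valued on Borel
   sets, null on the empty set, countably additive on Borel sets) *)
Definition is_gmeas (g : set M -> \bar R) : Prop :=
  [/\ g set0 = 0%E,
      (forall B, borelM B -> exists k : nat, g B = (k%:R)%:E) &
      (forall F : nat -> set M, (forall i, borelM (F i)) -> trivIset setT F ->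
         (fun k => (\sum_(0 <= i < k) g (F i))%E) @ \oo --> g (\bigcup_i F i))].

Lemma borelC (A : set M) : borelM A -> borelM (~` A).
Proof. by move=> bA; rewrite -(setTD A); exact: (@sigma_algebraCD _ setT open A). Qed.

Lemma borelU (A B : set M) : borelM A -> borelM B -> borelM (A `|` B).
Proof.
move=> bA bB; rewrite -bigcup2E; apply: sigma_algebra_bigcup => -[|[|i]] //=.
exact: sigma_algebra0.
Qed.

Lemma borelI (A B : set M) : borelM A -> borelM B -> borelM (A `&` B).
Proof.
move=> bA bB; rewrite -[A `&` B]setCK setCI.
by apply: borelC; apply: borelU; apply: borelC.
Qed.

Record gmeas := GMeas { gval :> set M -> \bar R; gvalP : is_gmeas gval }.

Lemma is_gmeas0 : is_gmeas (fun _ => 0%E).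
Proof.
split => //.
  by move=> B _; exists 0%N.
move=> F _ _; rewrite [X in X @ _ --> _](_ : _ = fun=> 0%E); last first.
  by apply: funext => k; rewrite big1.
exact: cvg_cst.
Qed.

Definition gzero : gmeas := GMeas is_gmeas0.

HB.instance Definition _ := gen_eqMixin gmeas.
HB.instance Definition _ := gen_choiceMixin gmeas.
HB.instance Definition _ := isPointed.Build gmeas gzero.

Definition gsets : set (set gmeas) :=
  [set E | exists B, borelM B /\
     exists U : set (\bar R), measurable U /\ E = (fun g : gmeas => g B) @^-1` U].

Definition G := g_sigma_algebraType gsets.

Lemma restr_gmeas (A : set M) (g : G) : borelM A -> is_gmeas (fun B => g (B `&` A)).
Proof.
move=> bA; case: (gvalP g) => g0 gnat gadd; split.
- by rewrite set0I.
- move=> B bB; apply: gnat; exact: borelI.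
- move=> F bF tF; rewrite setI_bigcupl; apply: gadd.
    by move=> i; apply: borelI.
  move=> i j _ _ [x [[Fix _] [Fjx _]]]; apply: (tF i j) => //; by exists x.
Qed.

Definition restr (A : set M) (g : G) : G :=
  match pselect (borelM A) with
  | left bA => GMeas (restr_gmeas g bA)
  | right _ => g
  end.

Lemma add_gmeas (g h : G) : is_gmeas (fun B => g B + h B)%E.
Proof.
case: (gvalP g) => g0 gnat gadd; case: (gvalP h) => h0 hnat hadd; split.
- by rewrite g0 h0 adde0.
- move=> B bB; have [k gk] := gnat B bB; have [l hl] := hnat B bB.
  by exists (k + l)%N; rewrite gk hl natrD.
- move=> F bF tF.
  rewrite [X in X @ _ --> _](_ : _ = (fun k => \sum_(0 <= i < k) g (F i)) \+
                                    (fun k => \sum_(0 <= i < k) h (F i)))%E; last first.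
    by apply: funext => k; rewrite /= big_split.
  apply: cvgeD; [|exact: gadd|exact: hadd].
  have bU : borelM (\bigcup_i F i) by apply: sigma_algebra_bigcup.
  have [k ->] := gnat _ bU; have [l ->] := hnat _ bU; by [].
Qed.

Definition gadd (g h : G) : G := GMeas (add_gmeas g h).

End Gdefs.
Arguments G {R} M.

Section Ops.
Context {R : realType} {M : pseudoMetricType R}.
Local Notation G := (G M).
Local Open Scope ereal_scope.

Definition wS (S : G -> R) (n : nat) (g : G) : R := expR (- S g / n%:R).

Definition sel (P : {measure set G -> \bar R}) (S : G -> R) (n : nat)
    (F : G -> \bar R) : \bar R :=
  (\int[P]_g ((wS S n g)%:E * F g)) *
  ((fine (\int[P]_g (wS S n g)%:E))^-1)%:E.

(* annealed recombination R_A Q[F] for a functional I (an integral against Q):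
   R_A Q[F] = \int..\int F(g1_{A1} + ... + gK_{AK}) dQ(g1)..dQ(gK) *)
Fixpoint recomb_rec (I : (G -> \bar R) -> \bar R) (As : seq (set M)) (acc : G)
    (F : G -> \bar R) : \bar R :=
  match As with
  | [::] => F acc
  | A :: As' => I (fun g => recomb_rec I As' (gadd acc (restr A g)) F)
  end.

Definition recomb (I : (G -> \bar R) -> \bar R) (K : nat) (A : 'I_K -> set M)
    (F : G -> \bar R) : \bar R :=
  recomb_rec I [seq A i | i <- enum 'I_K] gzero F.

Definition is_borel_partition (K : nat) (A : 'I_K -> set M) : Prop :=
  [/\ forall i, borelM (A i),
      forall i, A i !=set0,
      forall i j, i != j -> A i `&` A j = set0 &
      \bigcup_i A i = setT].

Definition is_rcd (Q : probability G R) (A : set M) (kappa : G -> probability G R) :=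
  [/\ forall B, measurable B -> measurable_fun setT (fun g => kappa g B),
      forall g, kappa g = kappa (restr A g) &
      forall B C, measurable B -> measurable C ->
        Q (B `&` (restr A) @^-1` C) = \int[Q]_(g in (restr A) @^-1` C) kappa g B].

Definition Shat (Q : probability G R) (S : G -> R) (n : nat) (K : nat)
    (kappa : 'I_K -> G -> probability G R) (g : G) : \bar R :=
  - (n%:R)%:E * \sum_(i < K) (lne (\int[kappa i g]_h (wS S n h)%:E)
                              - lne (\int[Q]_h (wS S n h)%:E)).

End Ops.

(* Main.v *)
Require Import Defs.
From HB Require Import structures.
From mathcomp Require Import all_boot all_order all_algebra.
From mathcomp Require Import all_classical all_reals all_analysis measurable_realfun.
Import Order.TTheory GRing.Theory Num.Theory numFieldNormedType.Exports.
Local Open Scope classical_set_scope.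
Local Open Scope ring_scope.

Section Basic.
Context {R : realType} {M : pseudoMetricType R}.
Local Notation G := (G M).
Local Open Scope ereal_scope.

Lemma gmeas_ext (g h : G) : (forall B, g B = h B) -> g = h.
Proof.
case: g => g gP; case: h => h hP /= e.
have ? : g = h by apply: funext.
subst h; congr GMeas; exact: Prop_irrelevance.
Qed.

Lemma restrE (A : set M) (g : G) B : borelM A -> restr A g B = g (B `&` A).
Proof. by move=> bA; rewrite /restr; case: pselect. Qed.

Lemma gaddE (g h : G) B : gadd g h B = g B + h B.
Proof. by []. Qed.

Lemma gzeroE B : (gzero : G) B = 0.
Proof. by []. Qed.

Lemma gmeas_ge0 (g : G) B : borelM B -> 0 <= g B.
Proof. by case: (gvalP g) => _ h _ /h [k ->]; rewrite lee_fin. Qed.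

Lemma measurable_eval B : borelM B -> measurable_fun [set: G] (fun g : G => g B).
Proof.
move=> bB _ U mU; rewrite setTI; apply: sub_gen_smallest.
by exists B; split => //; exists U.
Qed.

Lemma measurable_restr A : borelM A -> measurable_fun [set: G] (restr A).
Proof.
move=> bA; apply: measurability; first reflexivity.
move=> _ [E [B [bB [U [mU ->]]]] <-]; rewrite setTI.
apply: sub_gen_smallest; exists (B `&` A); split; first exact: borelI.
exists U; split => //; apply/seteqP; split => g /=; by rewrite restrE.
Qed.

Lemma measurable_gadd : measurable_fun [set: G * G] (fun p => gadd p.1 p.2).
Proof.
apply: measurability; first reflexivity.
move=> _ [E [B [bB [U [mU ->]]]] <-]; rewrite setTI.
have -> : (fun p : G * G => gadd p.1 p.2) @^-1` ((fun g : G => g B) @^-1` U)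
   = ((fun p : G * G => p.1 B) \+ (fun p : G * G => p.2 B)) @^-1` U by [].
rewrite -[X in measurable X]setTI.
apply: emeasurable_funD => //.
  exact: (measurableT_comp (measurable_eval _ bB) (@measurable_fst _ _ G G)).
exact: (measurableT_comp (measurable_eval _ bB) (@measurable_snd _ _ G G)).
Qed.

End Basic.

Section Pos.
Context d (T : measurableType d) (R : realType).
Local Open Scope ereal_scope.

Lemma integral_pos (P : probability T R) (f : T -> R) :
  measurable_fun setT f -> (forall x, (0 < f x)%R) -> 0 < \int[P]_x (f x)%:E.
Proof.
move=> mf fp.
pose F := fun k : nat => [set x | (k.+1%:R^-1 < f x)%R].
have mF k : measurable (F k).
  rewrite (_ : F k = setT `&` f @^-1` [set` `]k.+1%:R^-1, +oo[%R]); last first.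
    rewrite /F; apply/seteqP; split => x /=; rewrite in_itv /= andbT;
      [by move=> ?; split|by case].
  exact: mf.
have UF : \bigcup_k F k = setT.
  apply/seteqP; split => // x _.
  exists (Num.truncn (f x)^-1) => //=.
  rewrite /F /= -[X in (_ < X)%R](invrK (f x)) ltf_pV2 ?posrE ?invr_gt0//.
  exact: truncnS_gt.
have ndF : {homo F : n m / (n <= m)%N >-> (n <= m)%O}.
  move=> a b ab; apply/subsetPset => x /=; apply: le_lt_trans.
  by rewrite lef_pV2 ?posrE// ler_nat.
have [k Pk] : exists k, 0 < P (F k).
  apply/not_existsP => hF.
  have F0 k : P (F k) = 0.
    by apply/eqP; rewrite eq_le measure_ge0 andbT leNgt; apply/negP/hF.
  have h := nondecreasing_cvg_mu (mu := P) mF (bigcup_measurable (fun k _ => mF k)) ndF.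
  rewrite UF in h.
  have h0 : (P \o F) x @[x --> \oo] --> (0 : \bar R).
    rewrite (_ : P \o F = cst 0); last by apply/funext => k /=; rewrite F0.
    exact: cvg_cst.
  have e' : P setT = 0 := cvg_unique (@ereal_hausdorff R) h h0.
  by have := probability_setT P; rewrite e' => /eqP; rewrite eq_sym onee_eq0.
apply: (@lt_le_trans _ _ (\int[P]_x (k.+1%:R^-1 * \1_(F k) x)%:E)).
  under eq_integral do rewrite EFinM.
  rewrite ge0_integralZl//; last exact/measurable_EFinP/measurable_indic.
  by rewrite integral_indic// setIT mule_gt0// lte_fin invr_gt0.
apply: ge0_le_integral => //.
- apply/measurable_EFinP; apply: measurable_funM => //.
- exact/measurable_EFinP.
- move=> x _; rewrite lee_fin indicE; case: (boolP (x \in F k)) => [/[!inE] /ltW|_].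
    by rewrite mulr1.
  by rewrite mulr0 ltW.
Qed.

End Pos.

Section Tower.
Context d (T : measurableType d) (R : realType).
Local Open Scope ereal_scope.
Variables (Q : measure T R) (kap : T -> probability T R).
Hypothesis mkap : forall B, measurable B -> measurable_fun setT (fun x => kap x B).
Variables (D : set T) (mD : measurable D).
Hypothesis HD : forall B, measurable B -> Q (B `&` D) = \int[Q]_(x in D) kap x B.

Let tower_indic B (mB : measurable B) :
  \int[Q]_(x in D) (\1_B x)%:E = \int[Q]_(x in D) \int[kap x]_y (\1_B y)%:E.
Proof.
rewrite integral_indic// HD//; apply: eq_integral => x _.
by rewrite integral_indic// setIT.
Qed.

Import HBNNSimple.

Let tower_nnsfun (f : {nnsfun T >-> R}) :
  \int[Q]_(x in D) (f x)%:E = \int[Q]_(x in D) \int[kap x]_y (f y)%:E.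
Proof.
under [in LHS]eq_integral do rewrite fimfunE -fsumEFin//.
rewrite ge0_integral_fsum//; last 2 first.
  - by move=> r; exact/measurable_EFinP/measurable_funTS/measurableT_comp.
  - by move=> r z _; rewrite EFinM nnfun_muleindic_ge0.
under [in RHS]eq_integral.
  move=> y _.
  under eq_integral.
    by move=> z _; rewrite fimfunE -fsumEFin//; over.
  rewrite /= ge0_integral_fsum//; last 2 first.
    - by move=> r; exact/measurable_EFinP/measurableT_comp.
    - by move=> r z _; rewrite EFinM nnfun_muleindic_ge0.
  under eq_fsbigr.
    move=> r _.
    rewrite (integralZl_indic _ (fun r => f @^-1` [set r]))//; last first.
      by move=> r0; rewrite preimage_nnfun0.
    rewrite integral_indic// setIT.
    over.
  over.
rewrite /= ge0_integral_fsum//; last 2 first.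
  - move=> r; apply: measurable_funeM.
    by apply/measurable_funTS/mkap.
  - move=> n y _.
    have := mulemu_ge0 (fun n => f @^-1` [set n]).
    by apply; exact: preimage_nnfun0.
apply: eq_fsbigr => r _.
rewrite (integralZl_indic _ (fun r => f @^-1` [set r]))//; last first.
  exact: preimage_nnfun0.
rewrite /= tower_indic//.
have [r0|r0] := leP 0%R r.
  rewrite ge0_integralZl//.
    by under eq_integral do rewrite integral_indic// setIT.
  by apply/measurable_funTS/mkap.
rewrite integral0_eq ?mule0.
  by rewrite integral0_eq// => y _; rewrite preimage_nnfun0// measure0 mule0.
by move=> y _; rewrite integral0_eq// => z _; rewrite preimage_nnfun0// indic0.
Qed.

Lemma tower f : (forall z, 0 <= f z) -> measurable_fun [set: T] f ->
  \int[Q]_(x in D) f x = \int[Q]_(x in D) \int[kap x]_z f z.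
Proof.
move=> f0 mf.
pose f_ := nnsfun_approx measurableT mf.
transitivity (\int[Q]_(x in D) (lim ((f_ n x)%:E @[n --> \oo]))).
  by apply/eq_integral => z _; apply/esym/cvg_lim => //=; exact: cvg_nnsfun_approx.
rewrite monotone_convergence//; last 3 first.
  by move=> n; exact/measurable_funTS/measurable_EFinP.
  by move=> n z _; rewrite lee_fin.
  by move=> z _ a b ab; rewrite lee_fin; exact/lefP/nd_nnsfun_approx.
rewrite (_ : (fun _ => _) =
    (fun n => \int[Q]_(x in D) (\int[kap x]_z (f_ n z)%:E)))//; last first.
  by apply/funext => n; rewrite tower_nnsfun.
transitivity (\int[Q]_(x in D) lim ((\int[kap x]_z (f_ n z)%:E) @[n --> \oo])).
  rewrite -monotone_convergence//; last 3 first.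
  - move=> n; apply/measurable_funTS; apply: measurable_fun_integral_kernel => //.
    + by move=> z; rewrite lee_fin.
    + exact/measurable_EFinP.
  - by move=> n y _; apply: integral_ge0 => // z _; rewrite lee_fin.
  - move=> y _ a b ab; apply: ge0_le_integral => //.
    + by move=> z _; rewrite lee_fin.
    + exact/measurable_EFinP.
    + exact/measurable_EFinP.
    + by move=> z _; rewrite lee_fin; exact/lefP/nd_nnsfun_approx.
apply: eq_integral => y _; rewrite -monotone_convergence//; last 3 first.
  - by move=> n; exact/measurable_EFinP.
  - by move=> n z _; rewrite lee_fin.
  - by move=> z _ a b ab; rewrite lee_fin; exact/lefP/nd_nnsfun_approx.
by apply: eq_integral => z _; apply/cvg_lim => //; exact: cvg_nnsfun_approx.
Qed.

End Tower.

Section Ext.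
Context d d' (T : measurableType d) (T' : measurableType d') (R : realType).
Local Open Scope ereal_scope.
Variable (m : measure T R) (psi : T -> T').
Hypothesis mpsi : measurable_fun setT psi.

Import HBNNSimple.

Let ext_lim (u : T -> R) (mu : measurable_fun setT u) (u0 : forall x, (0 <= u x)%R)
  (phi : T' -> \bar R) (mphi : measurable_fun setT phi) (phi0 : forall y, 0 <= phi y) :
  \int[m]_x ((u x)%:E * phi (psi x)) =
  limn (fun n => \int[m]_x ((u x)%:E * (nnsfun_approx measurableT mphi n (psi x))%:E)).
Proof.
pose f_ := nnsfun_approx measurableT mphi.
rewrite -monotone_convergence//; last 3 first.
- move=> n; apply: emeasurable_funM; first exact/measurable_EFinP.
  apply/measurable_EFinP; exact: measurableT_comp.
- by move=> n x _; rewrite mule_ge0// lee_fin.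
- move=> x _ a b ab; rewrite lee_wpmul2l ?lee_fin//.
  exact/lefP/nd_nnsfun_approx.
apply: eq_integral => x _; apply/esym/cvg_lim => //.
apply: cvgeZl => //; exact: cvg_nnsfun_approx.
Qed.

Let ext_nnsfun (u : T -> R) (mu : measurable_fun setT u) (u0 : forall x, (0 <= u x)%R)
  (f : {nnsfun T' >-> R}) :
  \int[m]_x ((u x)%:E * (f (psi x))%:E) =
  \sum_(r \in range f) r%:E * \int[m]_x ((u x)%:E * (\1_(f @^-1` [set r]) (psi x))%:E).
Proof.
have E x : (u x)%:E * (f (psi x))%:E =
    \sum_(r \in range f) ((u x)%:E * (r * \1_(f @^-1` [set r]) (psi x))%:E).
  rewrite fimfunE -fsumEFin// ge0_mule_fsumr// => r.
  by rewrite EFinM nnfun_muleindic_ge0.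
under eq_integral do rewrite E.
rewrite ge0_integral_fsum//; last 2 first.
- move=> r; apply: emeasurable_funM; first exact/measurable_EFinP.
  apply/measurable_EFinP; apply: measurableT_comp => //.
  exact: (measurableT_comp (measurable_indic (D := setT) (measurable_sfunP f (measurable_set1 r))) mpsi).
- by move=> r x _; rewrite mule_ge0 ?lee_fin// -lee_fin EFinM nnfun_muleindic_ge0.
apply: eq_fsbigr => r /[!inE] -[y _ <-].
rewrite -ge0_integralZl//; last 3 first.
- apply: emeasurable_funM; first exact/measurable_EFinP.
  apply/measurable_EFinP; apply: measurableT_comp => //; exact: measurable_indic.
- by move=> x _; rewrite mule_ge0 ?lee_fin.
- by rewrite lee_fin.
by apply: eq_integral => x _; rewrite EFinM muleCA.
Qed.

Lemma ext_gen (u v : T -> R) (mu : measurable_fun setT u) (u0 : forall x, (0 <= u x)%R)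
  (mv : measurable_fun setT v) (v0 : forall x, (0 <= v x)%R) :
  (forall C, measurable C ->
    \int[m]_x ((u x)%:E * (\1_C (psi x))%:E) = \int[m]_x ((v x)%:E * (\1_C (psi x))%:E)) ->
  forall phi : T' -> \bar R, measurable_fun setT phi -> (forall y, 0 <= phi y) ->
  \int[m]_x ((u x)%:E * phi (psi x)) = \int[m]_x ((v x)%:E * phi (psi x)).
Proof.
move=> H phi mphi phi0.
rewrite (@ext_lim u mu u0 phi mphi phi0) (@ext_lim v mv v0 phi mphi phi0); congr (limn _).
apply/funext => n; rewrite !ext_nnsfun//; apply: eq_fsbigr => r _.
by rewrite H.
Qed.

End Ext.

Section Alg.
Context {R : realType} {M : pseudoMetricType R}.
Local Notation G := (G M).
Local Open Scope ereal_scope.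

Lemma restr_gadd A (g h : G) : borelM A ->
  restr A (gadd g h) = gadd (restr A g) (restr A h).
Proof. by move=> bA; apply: gmeas_ext => B; rewrite !restrE // !gaddE !restrE. Qed.

Lemma restr_restr A A' (g : G) : borelM A -> borelM A' ->
  restr A (restr A' g) = restr (A `&` A') g.
Proof.
move=> bA bA'; apply: gmeas_ext => B.
by rewrite !restrE ?setIA //; exact: borelI.
Qed.

Lemma restr_set0 (g : G) : restr set0 g = gzero.
Proof.
apply: gmeas_ext => B; rewrite restrE ?setI0 ?gzeroE.
  by case: (gvalP g).
exact: sigma_algebra0.
Qed.

Lemma restr_gzero A : borelM A -> restr A (gzero : G) = gzero.
Proof. by move=> bA; apply: gmeas_ext => B; rewrite restrE. Qed.

Lemma gadd0g (g : G) : gadd gzero g = g.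
Proof. by apply: gmeas_ext => B; rewrite gaddE gzeroE add0e. Qed.

Lemma gaddg0 (g : G) : gadd g gzero = g.
Proof. by apply: gmeas_ext => B; rewrite gaddE gzeroE adde0. Qed.

Lemma restr_id A (g : G) : borelM A -> restr A (restr A g) = restr A g.
Proof. by move=> bA; rewrite restr_restr // setIid. Qed.

End Alg.

Section Main.
Context (R : realType) (M : pseudoMetricType R).
Local Notation G := (G M).
Local Open Scope ereal_scope.
Variables (S : G -> R) (S_ge0 : forall g, (0 <= S g)%R) (S_meas : measurable_fun setT S).
Variables (n : nat) (n_gt0 : (0 < n)%N) (K : nat) (A : 'I_K -> set M).
Hypothesis A_part : is_borel_partition A.
Variables (Q : probability G R) (kappa : 'I_K -> G -> probability G R).
Hypothesis kappa_rcd : forall i, is_rcd Q (A i) (kappa i).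

Local Notation w := (wS S n).
Local Notation Z := (\int[Q]_h (w h)%:E).
Local Notation z := (fine Z).

Let bA i : borelM (A i). Proof. by case: A_part. Qed.
Let dA i j : i != j -> A i `&` A j = set0. Proof. by case: A_part => _ _ h _; apply: h. Qed.

Let w_gt0 g : (0 < w g)%R. Proof. exact: expR_gt0. Qed.
Let w_le1 g : (w g <= 1)%R.
Proof.
rewrite /wS expR_le1 mulNr oppr_le0 divr_ge0 //.
Qed.

Let mw : measurable_fun setT w.
Proof.
rewrite /wS; apply: measurableT_comp; first exact: measurable_expR.
apply: measurable_funM => //.
exact: measurableT_comp (@oppr_measurable R setT) S_meas.
Qed.

Let int_w_bounds (P : probability G R) :
  0 < \int[P]_h (w h)%:E /\ \int[P]_h (w h)%:E <= 1.
Proof.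
split; first exact: integral_pos.
apply: (@le_trans _ _ (\int[P]_h (cst 1 h))).
  apply: ge0_le_integral => //.
  - by move=> x _; rewrite lee_fin ltW.
  - exact/measurable_EFinP.
  - by move=> x _; rewrite lee_fin.
by rewrite integral_cst// mul1e; exact: sprobability_setT.
Qed.

Let int_wE (P : probability G R) : \int[P]_h (w h)%:E = (fine (\int[P]_h (w h)%:E))%:E.
Proof.
have [h0 h1] := int_w_bounds P.
rewrite fineK// ge0_fin_numE ?(ltW h0)//.
exact: le_lt_trans h1 (ltey _).
Qed.

Let int_w_gt0 (P : probability G R) : (0 < fine (\int[P]_h (w h)%:E))%R.
Proof. by rewrite -lte_fin -int_wE; case: (int_w_bounds P). Qed.

Definition cr i g := fine (\int[kappa i g]_h (w h)%:E).

Let crE i g : \int[kappa i g]_h (w h)%:E = (cr i g)%:E.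
Proof. exact: int_wE. Qed.

Let cr_gt0 i g : (0 < cr i g)%R. Proof. exact: int_w_gt0. Qed.

Let mcr i : measurable_fun setT (cr i).
Proof.
apply/measurable_EFinP.
rewrite (_ : _ \o _ = fun g => \int[kappa i g]_h (w h)%:E); last first.
  by apply/funext => g; rewrite crE.
case: (kappa_rcd i) => mk _ _.
apply: measurable_fun_integral_kernel => //.
- by move=> h; rewrite lee_fin ltW.
- exact/measurable_EFinP.
Qed.


Let indic_int (u : G -> R) (psi : G -> G) (C : set G) :
  \int[Q]_x ((u x)%:E * (\1_C (psi x))%:E) = \int[Q]_(x in psi @^-1` C) (u x)%:E.
Proof.
rewrite [RHS]integral_mkcond; apply: eq_integral => x _.
rewrite /patch !indicE; case: ifPn.
  by move=> /set_mem h; rewrite mem_set // mule1.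
move=> h; rewrite memNset ?mule0//.
by apply: contra_not (negP h) => ?; exact: mem_set.
Qed.

Lemma tower_restr i (phi : G -> \bar R) : measurable_fun setT phi -> (forall y, 0 <= phi y) ->
  \int[Q]_g ((w g)%:E * phi (restr (A i) g)) = \int[Q]_g ((cr i g)%:E * phi (restr (A i) g)).
Proof.
move=> mphi phi0.
have mr := measurable_restr _ (bA i).
case: (kappa_rcd i) => mk _ H.
apply: ext_gen => //.
- by move=> x; rewrite ltW.
- by move=> x; rewrite ltW.
move=> C mC; rewrite !indic_int.
have mD : measurable (restr (A i) @^-1` C).
  by rewrite -[X in measurable X]setTI; exact: mr.
rewrite (@tower _ _ _ Q (kappa i) mk _ mD) //.
- by apply: eq_integral => g _; rewrite crE.
- by move=> B mB; exact: H.
- by move=> h; rewrite lee_fin ltW.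
- exact/measurable_EFinP.
Qed.


Local Notation I := (fun F : G -> \bar R => \int[Q]_g F g).

Let mshift i (acc : G) : measurable_fun setT (fun g : G => gadd acc (restr (A i) g)).
Proof.
apply: (measurableT_comp (f := fun p : G * G => gadd p.1 p.2)
                          (g := fun g : G => (acc, restr (A i) g))).
  exact: measurable_gadd.
apply: measurable_fun_pair; first exact: measurable_cst.
exact: measurable_restr _ (bA i).
Qed.

Lemma meas_rec (l : seq 'I_K) F : measurable_fun setT F -> (forall s, 0 <= F s) ->
  measurable_fun setT (fun acc => recomb_rec I [seq A i | i <- l] acc F) /\
  (forall acc, 0 <= recomb_rec I [seq A i | i <- l] acc F).
Proof.
move=> mF F0; elim: l => [|i l [IHm IH0]] /=; first by [].
split; last by move=> acc; apply: integral_ge0 => g _.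
pose f (p : G * G) := recomb_rec I [seq A i | i <- l] (gadd p.1 (restr (A i) p.2)) F.
have mf : measurable_fun setT f.
  apply: (measurableT_comp (f := fun acc => recomb_rec I [seq A i | i <- l] acc F)
          (g := fun p : G * G => gadd p.1 (restr (A i) p.2))) => //.
  apply: (measurableT_comp (f := fun p : G * G => gadd p.1 p.2)
          (g := fun p : G * G => (p.1, restr (A i) p.2))).
    exact: measurable_gadd.
  apply: measurable_fun_pair; first exact: measurable_fst.
  exact: measurableT_comp (measurable_restr _ (bA i)) measurable_snd.
exact: (measurable_fun_fubini_tonelli_F (m2 := Q) f mf (fun p => IH0 _)).
Qed.

Lemma pull_rec (l : seq 'I_K) (k : R) : (0 <= k)%R -> forall acc F,
  measurable_fun setT F -> (forall s, 0 <= F s) ->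
  recomb_rec I [seq A i | i <- l] acc (fun s => k%:E * F s) =
  k%:E * recomb_rec I [seq A i | i <- l] acc F.
Proof.
move=> k0; elim: l => [|i l IH] acc F mF F0 //=.
under eq_integral do rewrite IH //.
have [m0 p0] := meas_rec l F mF F0.
rewrite ge0_integralZl //.
  exact: measurableT_comp m0 (mshift i acc).
Qed.

Lemma ext_rec (J : (G -> \bar R) -> \bar R) (l : seq 'I_K) (P : G -> Prop) acc F F' :
  P acc -> (forall s j g, j \in l -> P s -> P (gadd s (restr (A j) g))) ->
  (forall s, P s -> F s = F' s) ->
  recomb_rec J [seq A i | i <- l] acc F = recomb_rec J [seq A i | i <- l] acc F'.
Proof.
elim: l acc => [|i l IH] acc Pacc HP HF /=; first exact: HF.
congr J; apply/funext => g; apply: IH.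
- by apply: HP => //; rewrite mem_head.
- by move=> s j h jl Ps; apply: HP => //; rewrite in_cons jl orbT.
- exact: HF.
Qed.


Definition fac (l : seq 'I_K) (s : G) : R := (\prod_(j <- l) (cr j s / z))%R.

Let mfac l : measurable_fun setT (fac l).
Proof.
elim: l => [|i l IH].
  by rewrite /fac; under eq_fun do rewrite big_nil; exact: measurable_cst.
rewrite /fac; under eq_fun do rewrite big_cons.
apply: measurable_funM => //; apply: measurable_funM => //.
Qed.

Let fac_ge0 l s : (0 <= fac l s)%R.
Proof.
rewrite /fac; apply: prodr_ge0 => j _.
by rewrite divr_ge0 // ltW // int_w_gt0.
Qed.

Let kappa_restr i (g : G) : kappa i g = kappa i (restr (A i) g).
Proof. by case: (kappa_rcd i) => _ h _; apply: h. Qed.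

Lemma main_ind (l : seq 'I_K) : uniq l -> forall acc : G,
  (forall i, i \in l -> restr (A i) acc = gzero) ->
  forall F, measurable_fun setT F -> (forall s, 0 <= F s) ->
  recomb_rec (sel Q S n) [seq A i | i <- l] acc F =
  recomb_rec I [seq A i | i <- l] acc (fun s => F s * (fac l s)%:E).
Proof.
elim: l => [|i l IH] /=.
  by move=> _ acc _ F _ _; rewrite /fac big_nil mule1.
move=> /andP [il ul] acc Hacc F mF F0.
have Hacc' g j : j \in l -> restr (A j) (gadd acc (restr (A i) g)) = gzero.
  move=> jl; rewrite restr_gadd // Hacc ?in_cons ?jl ?orbT //.
  rewrite restr_restr // dA ?restr_set0 ?gadd0g //.
  by apply: contraNneq il => <-.
pose F1 s := F s * (fac l s)%:E.
have mF1 : measurable_fun setT F1.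
  apply: emeasurable_funM => //; exact/measurable_EFinP.
have F10 s : 0 <= F1 s by rewrite mule_ge0 // lee_fin.
have [mrec prec] := meas_rec l F1 mF1 F10.
rewrite /sel.
under eq_integral => g _ do rewrite (IH ul _ (Hacc' g)) //.
pose Psi h := recomb_rec I [seq A i | i <- l] (gadd acc h) F1.
have mPsi : measurable_fun setT Psi.
  apply: (measurableT_comp (f := fun acc => recomb_rec I [seq A i | i <- l] acc F1)
          (g := fun h => gadd acc h)) => //.
  apply: (measurableT_comp (f := fun p : G * G => gadd p.1 p.2)
          (g := fun h : G => (acc, h))).
    exact: measurable_gadd.
  apply: measurable_fun_pair; first exact: measurable_cst.
  exact: measurable_id.
rewrite (tower_restr i Psi) //.
rewrite -ge0_integralZr //; last 2 first.
- by move=> g _; rewrite mule_ge0 ?lee_fin ?(ltW (cr_gt0 _ _)) //; exact: prec.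
- by rewrite lee_fin invr_ge0 ltW // int_w_gt0.
apply: eq_integral => g _.
rewrite muleAC -EFinM -pull_rec //; last by rewrite divr_ge0 // ltW // int_w_gt0.
pose acc' := gadd acc (restr (A i) g).
have ri : restr (A i) acc' = restr (A i) g.
  by rewrite /acc' restr_gadd // Hacc ?mem_head // restr_id // gadd0g.
apply: (@ext_rec I l (fun s => restr (A i) s = restr (A i) acc')) => //.
- move=> s j h jl Ps; rewrite restr_gadd // Ps restr_restr // dA ?restr_set0 ?gaddg0 //.
  by apply: contraNneq il => ->.
- move=> s Ps; rewrite /F1 /fac big_cons.
  have -> : cr i s = cr i g by rewrite /cr kappa_restr Ps ri -kappa_restr.
  by rewrite muleCA -EFinM.
- apply: emeasurable_funM; first exact/measurable_EFinP.
  exact: measurableT_comp mPsi (measurable_restr _ (bA i)).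
- by move=> y; exact: prec.
Qed.


Lemma main_eq (E : set G) : measurable E ->
  recomb (sel Q S n) A (fun g => (\1_E g)%:E) =
  recomb (fun F => (\int[Q]_g F g)%E) A
    (fun g => ((\1_E g)%:E * expeR (- Shat Q S n kappa g * ((n%:R)^-1)%:E))%E).
Proof.
move=> mE; rewrite /recomb main_ind //.
congr recomb_rec; apply/funext => s; congr (_ * _).
have e : \sum_(i < K) (lne (\int[kappa i s]_h (w h)%:E) - lne (\int[Q]_h (w h)%:E)) =
    (\sum_(i < K) (ln (cr i s) - ln z))%:E.
  rewrite -sumEFin; apply: eq_bigr => i _.
  by rewrite crE [in lne (\int[Q]_h _)](int_wE Q) !lne_EFin // int_w_gt0.
rewrite /Shat e !mulNe oppeK -!EFinM /=; congr EFin.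
  rewrite mulrAC divff ?mul1r; last by rewrite pnatr_eq0 -lt0n.
  rewrite expR_sum /fac big_enum /=.
  apply: eq_bigr => i _; rewrite expRB !lnK //; rewrite posrE //; exact: int_w_gt0.
- exact: enum_uniq.
- by move=> i _; rewrite restr_gzero.
- by apply/measurable_EFinP; exact: measurable_indic.
Qed.

End Main.

Theorem lemma7p2 (R : realType) (M : completePseudoMetricType R)
  (M_hausdorff : hausdorff_space M)
  (M_separable : exists D : set M, countable D /\ dense D)
  (S : G M -> R) (S_ge0 : forall g, 0 <= S g) (S_meas : measurable_fun setT S)
  (n : nat) (n_gt0 : (0 < n)%N)
  (K : nat) (A : 'I_K -> set M) (A_part : is_borel_partition A)
  (Q : probability (G M) R)
  (kappa : 'I_K -> G M -> probability (G M) R)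
  (kappa_rcd : forall i, is_rcd Q (A i) (kappa i)) :
  forall E : set (G M), measurable E ->
    recomb (sel Q S n) A (fun g => (\1_E g)%:E) =
    recomb (fun F => (\int[Q]_g F g)%E) A
      (fun g => ((\1_E g)%:E *
                 expeR (- Shat Q S n kappa g * ((n%:R)^-1)%:E))%E).
Proof.
move=> E mE; exact: main_eq.
Qed.
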